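(* Consider the complex-valued protocol. Let $\mathcal F$ be a compact subset of $C(\mathbf X)$ and $M>0$ be such that $$L:=\limsup_{\epsilon\to0}\frac{\mathcal H_\epsilon(\mathcal F)}{\log^M(1/\epsilon)}\in(0,\infty).$$ There exists a strategy for Predictor such that for every $F\in\mathcal F$ there is $N_0$ (depending on $F$ but not on Reality's moves) such that for all $N\ge N_0$ and all moves of Reality $$\sum_{n=1}^N|y_n-\mu_n|^2\le\sum_{n=1}^N|y_n-F(x_n)|^2+CL\log^MN,$$ where $C$ is a universal constant.
   Context: Complex-valued protocol: $\mathbf X$ a nonempty topological space; at each round $n$ Reality announces $x_n\in\mathbf X$, Predictor announces $\mu_n\in\mathbb C$, Reality announces $y_n\in\mathbb C$ with $|y_n|\le1$; a strategy for Predictor maps each history $(x_1,y_1,\dots,x_{n-1},y_{n-1},x_n)$ to $\mu_n$. Here $C(\mathbf X)$ denotes the bounded continuous complex-valued functions on $\mathbf X$ with the supremum norm. $\mathcal H_\epsilon(A)$: $\log_2$ of the minimal number of points of $A$ forming an $\epsilon$-net for $A$ in the supremum metric. $\log=\log_2$. *)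

(* Defs.v *)
(* Complex numbers are pairs (Re, Im) : R * R,
   carrying the product topology (= the usual topology of C). *)
From Stdlib Require Import Reals List ClassicalEpsilon.
From mathcomp Require Import all_boot all_classical.
From mathcomp Require Import topology Rstruct Rstruct_topology.

Set Implicit Arguments.
Unset Strict Implicit.
Unset Printing Implicit Defensive.

Local Open Scope R_scope.

Definition Cpx : Type := (R * R)%type.
Definition csub (z w : Cpx) : Cpx := (fst z - fst w, snd z - snd w).
Definition cabs (z : Cpx) : R := sqrt (fst z ^ 2 + snd z ^ 2).

Definition log2 (x : R) : R := ln x / ln 2.

(* x ^ M for real M >= 0 exponent, with the convention 0 ^ M = 0 (M > 0) *)
Definition rpow (x M : R) : R := if Rlt_dec 0 x then Rpower x M else 0.

Section CX.
Variable X : topologicalType.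

Definition bcont (f : X -> Cpx) : Prop :=
  continuous f /\ exists B : R, forall x, cabs (f x) <= B.

Definition supdist_le (f g : X -> Cpx) (e : R) : Prop :=
  forall x, cabs (csub (f x) (g x)) <= e.
Definition supdist_lt (f g : X -> Cpx) (r : R) : Prop :=
  exists r', r' < r /\ supdist_le f g r'.

Definition sup_open (U : set (X -> Cpx)) : Prop :=
  forall f, bcont f -> U f ->
    exists r, 0 < r /\ forall g, bcont g -> supdist_lt f g r -> U g.

Definition sup_compact (A : set (X -> Cpx)) : Prop :=
  (forall f, A f -> bcont f) /\
  forall (I : Type) (U : I -> set (X -> Cpx)),
    (forall i, sup_open (U i)) ->
    (forall f, A f -> exists i, U i f) ->
    exists s : list I, forall f, A f -> exists i, In i s /\ U i f.

Definition is_net (A : set (X -> Cpx)) (e : R) (s : list (X -> Cpx)) : Prop :=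
  (forall g, In g s -> A g) /\
  (forall f, A f -> exists g, In g s /\ supdist_le f g e).

Definition is_covnum (A : set (X -> Cpx)) (e : R) (n : nat) : Prop :=
  (exists s, is_net A e s /\ length s = n) /\
  (forall s, is_net A e s -> (n <= length s)%coq_nat).

Definition covnum (A : set (X -> Cpx)) (e : R) : nat :=
  epsilon (inhabits 0%nat) (fun n => is_covnum A e n).

Definition entropy (A : set (X -> Cpx)) (e : R) : R := log2 (INR (covnum A e)).
End CX.

Definition is_limsup0 (h : R -> R) (L : R) : Prop :=
  (forall eta, 0 < eta -> exists d, 0 < d /\
     forall e, 0 < e < d -> h e <= L + eta) /\
  (forall eta d, 0 < eta -> 0 < d -> exists e, 0 < e < d /\ L - eta <= h e).

Fixpoint rsum (f : nat -> R) (N : nat) : R :=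
  match N with O => 0 | S k => rsum f k + f k end.

Definition strategy (X : Type) : Type := list (X * Cpx) -> X -> Cpx.

(* the prediction at round n (0-based) given Reality's moves xs, ys *)
Definition pred_at (X : Type) (S : strategy X) (xs : nat -> X) (ys : nat -> Cpx)
  (n : nat) : Cpx :=
  S (List.map (fun i => (xs i, ys i)) (List.seq 0 n)) (xs n).

(* Main.v *)
Require Import Defs.
From Stdlib Require Import Reals Lra Psatz List ClassicalEpsilon Classical.
From mathcomp Require Import all_boot all_classical.
From mathcomp Require Import topology Rstruct Rstruct_topology.
From mathcomp Require Import zify.
Local Open Scope R_scope.

Lemma rsum_ext (f g : nat -> R) n :
  (forall i, (i < n)%coq_nat -> f i = g i) -> rsum f n = rsum g n.
Proof.
induction n as [|n IH]; intros H; simpl; [reflexivity|].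
rewrite IH; [|intros; apply H; lia]. rewrite (H n); [reflexivity|lia].
Qed.

Lemma rsum_le (f g : nat -> R) n :
  (forall i, (i < n)%coq_nat -> f i <= g i) -> rsum f n <= rsum g n.
Proof.
induction n as [|n IH]; intros H; simpl; [lra|].
assert (rsum f n <= rsum g n) by (apply IH; intros; apply H; lia).
assert (f n <= g n) by (apply H; lia). lra.
Qed.

Lemma rsum_plus (f g : nat -> R) n :
  rsum (fun i => f i + g i) n = rsum f n + rsum g n.
Proof. induction n as [|n IH]; simpl; [lra|]. rewrite IH. lra. Qed.

Lemma rsum_scal (c : R) (f : nat -> R) n :
  rsum (fun i => c * f i) n = c * rsum f n.
Proof. induction n as [|n IH]; simpl; [lra|]. rewrite IH. lra. Qed.

Lemma rsum_minus (f g : nat -> R) n :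
  rsum (fun i => f i - g i) n = rsum f n - rsum g n.
Proof. induction n as [|n IH]; simpl; [lra|]. rewrite IH. lra. Qed.

Lemma rsum_nonneg (f : nat -> R) n :
  (forall i, (i < n)%coq_nat -> 0 <= f i) -> 0 <= rsum f n.
Proof.
intros H. apply Rle_trans with (rsum (fun _ => 0) n).
- clear H; induction n; simpl; lra.
- apply rsum_le; auto.
Qed.

Lemma rsum_term (f : nat -> R) n i :
  (forall i, (i < n)%coq_nat -> 0 <= f i) -> (i < n)%coq_nat -> f i <= rsum f n.
Proof.
induction n as [|n IH]; intros H Hi; [lia|]. simpl.
destruct (Nat.eq_dec i n) as [->|Hne].
- assert (0 <= rsum f n) by (apply rsum_nonneg; intros; apply H; lia). lra.
- assert (f i <= rsum f n) by (apply IH; [intros; apply H; lia| lia]).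
  assert (0 <= f n) by (apply H; lia). lra.
Qed.

Lemma rsum_pos (f : nat -> R) n i :
  (forall i, (i < n)%coq_nat -> 0 <= f i) -> (i < n)%coq_nat -> 0 < f i -> 0 < rsum f n.
Proof. intros H Hi Hp. pose proof (rsum_term f n i H Hi). lra. Qed.

Lemma rsum_split (f : nat -> R) a b :
  rsum f (a + b)%coq_nat = rsum f a + rsum (fun i => f (a + i)%coq_nat) b.
Proof.
induction b as [|b IH].
- rewrite Nat.add_0_r. simpl. lra.
- rewrite Nat.add_succ_r. simpl. rewrite IH. lra.
Qed.

Lemma rsum_zero (f : nat -> R) n :
  (forall i, (i < n)%coq_nat -> f i = 0) -> rsum f n = 0.
Proof.
intros H. rewrite (rsum_ext f (fun _ => 0)); auto. clear. induction n; simpl; lra.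
Qed.

Lemma rsum_le_const (g : nat -> R) (B : R) N :
  (forall t, g t <= B) -> rsum g N <= B * INR N.
Proof.
intros Hg. induction N as [|N IH]; [simpl; lra|].
change (rsum g (S N)) with (rsum g N + g N). rewrite S_INR. specialize (Hg N). lra.
Qed.

Lemma rsum_bound_min (g : nat -> R) (B : R) s0 N :
  0 <= B -> (forall t, g t <= B) -> (forall t, (s0 <= t)%coq_nat -> g t <= 0) ->
  rsum g N <= B * INR s0.
Proof.
intros HB Hg H0. destruct (Nat.le_gt_cases N s0) as [Hle|Hlt].
- apply Rle_trans with (B * INR N); [apply rsum_le_const; auto|].
  apply Rmult_le_compat_l; [lra|]. apply le_INR; auto.
- replace N with (s0 + (N - s0))%coq_nat by lia. rewrite rsum_split.
  assert (rsum g s0 <= B * INR s0) by (apply rsum_le_const; auto).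
  assert (rsum (fun i => g (s0 + i)%coq_nat) (N - s0) <= 0 * INR (N - s0)).
  { apply rsum_le_const. intros t. apply H0. lia. }
  lra.
Qed.

Lemma exp_bound (x : R) : x <= /2 -> exp x <= 1 + x + 2 * x ^ 2.
Proof.
intros Hx.
assert (H1 : 1 - x <= exp (- x)) by (pose proof (exp_ineq1_le (- x)); lra).
assert (Hp : 0 < 1 - x) by lra.
assert (He : exp x * exp (- x) = 1) by (rewrite <- exp_plus; replace (x + - x) with 0 by ring; apply exp_0).
assert (Hex : 0 < exp x) by apply exp_pos.
assert (exp x * (1 - x) <= 1) by (rewrite <- He; apply Rmult_le_compat_l; lra).
assert (1 <= (1 - x) * (1 + x + 2 * x ^ 2)) by nra.
nra.
Qed.

Definition eta : R := / 64.

Lemma tangent (y1 y2 m1 m2 p1 p2 : R) :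
  -1 <= y1 <= 1 -> -1 <= y2 <= 1 -> -1 <= m1 <= 1 -> -1 <= m2 <= 1 ->
  -1 <= p1 <= 1 -> -1 <= p2 <= 1 ->
  exp (- eta * (((y1 - p1) ^ 2 + (y2 - p2) ^ 2) - ((y1 - m1) ^ 2 + (y2 - m2) ^ 2)))
  <= 1 + 2 * eta * ((y1 - m1) * (p1 - m1) + (y2 - m2) * (p2 - m2)).
Proof.
intros. unfold eta.
set (d1 := p1 - m1). set (d2 := p2 - m2).
set (u1 := (y1 - m1) + (y1 - p1)). set (u2 := (y2 - m2) + (y2 - p2)).
set (x := - / 64 * (((y1 - p1) ^ 2 + (y2 - p2) ^ 2) - ((y1 - m1) ^ 2 + (y2 - m2) ^ 2))).
assert (Hx : x = / 64 * (d1 * u1 + d2 * u2)) by (unfold x, d1, d2, u1, u2; ring).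
assert (Hu1 : u1 ^ 2 <= 16) by (unfold u1; nra).
assert (Hu2 : u2 ^ 2 <= 16) by (unfold u2; nra).
assert (Hd1 : d1 ^ 2 <= 4) by (unfold d1; nra).
assert (Hd2 : d2 ^ 2 <= 4) by (unfold d2; nra).
assert (CS : (d1 * u1 + d2 * u2) ^ 2 <= (d1 ^ 2 + d2 ^ 2) * (u1 ^ 2 + u2 ^ 2)).
{ assert (0 <= (d1*u2-d2*u1)^2) by apply pow2_ge_0.
  assert ((d1 ^ 2 + d2 ^ 2) * (u1 ^ 2 + u2 ^ 2) - (d1 * u1 + d2 * u2) ^ 2 = (d1*u2-d2*u1)^2) by ring.
  lra. }
assert (Hs : d1 * u1 + d2 * u2 <= 32).
{ assert (0 <= (d1-u1)^2) by apply pow2_ge_0.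
  assert (0 <= (d2-u2)^2) by apply pow2_ge_0.
  assert ((d1-u1)^2 = d1^2 + u1^2 - 2*(d1*u1)) by ring.
  assert ((d2-u2)^2 = d2^2 + u2^2 - 2*(d2*u2)) by ring. lra. }
assert (Hxle : x <= / 2) by (rewrite Hx; lra).
apply Rle_trans with (1 + x + 2 * x ^ 2); [apply exp_bound; auto|].
assert (Hsq : 2 * x ^ 2 <= / 64 * (d1 ^ 2 + d2 ^ 2)).
{ rewrite Hx.
  assert ((d1 ^ 2 + d2 ^ 2) * (u1 ^ 2 + u2 ^ 2) <= (d1 ^ 2 + d2 ^ 2) * 32).
  { apply Rmult_le_compat_l; [|lra]. pose proof (pow2_ge_0 d1); pose proof (pow2_ge_0 d2); lra. }
  assert (x ^ 2 = /64 * /64 * (d1 * u1 + d2 * u2) ^ 2) by (rewrite Hx; ring).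
  lra. }
assert (Hid : 2 * / 64 * ((y1 - m1) * d1 + (y2 - m2) * d2) = x + / 64 * (d1 ^ 2 + d2 ^ 2)).
{ rewrite Hx. unfold u1, u2, d1, d2. ring. }
lra.
Qed.

Definition clip (a : R) : R := Rmax (-1) (Rmin 1 a).
Definition clipC (z : Cpx) : Cpx := (clip (fst z), clip (snd z)).
Definition lossP (p y : Cpx) : R := (fst y - fst p) ^ 2 + (snd y - snd p) ^ 2.

Lemma clip_range a : -1 <= clip a <= 1.
Proof. unfold clip, Rmax, Rmin. destruct (Rle_dec 1 a); destruct (Rle_dec (-1) _); lra. Qed.

Lemma clip_close y a : -1 <= y <= 1 -> Rabs (y - clip a) <= Rabs (y - a).
Proof.
intros Hy. unfold clip, Rmax, Rmin.
destruct (Rle_dec 1 a); destruct (Rle_dec (-1) _);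
 unfold Rabs; repeat destruct Rcase_abs; lra.
Qed.

Lemma clip_lip a b : Rabs (clip a - clip b) <= Rabs (a - b).
Proof.
unfold clip, Rmax, Rmin.
destruct (Rle_dec 1 a); destruct (Rle_dec 1 b); repeat destruct (Rle_dec (-1) _);
 unfold Rabs; repeat destruct Rcase_abs; lra.
Qed.

Lemma approx_coord y f g : -1 <= y <= 1 ->
  (y - clip g) ^ 2 <= (y - f) ^ 2 + 4 * Rabs (f - g) + (f - g) ^ 2.
Proof.
intros Hy.
pose proof (clip_close y f Hy) as H1. pose proof (clip_lip f g) as H2.
pose proof (clip_range f). pose proof (clip_range g).
set a := y - clip f in H1 *. set b := clip f - clip g in H2 *.
assert (E : y - clip g = a + b) by (unfold a, b; ring). rewrite E.
assert (Ha : Rabs a <= 2) by (unfold a; unfold Rabs; destruct Rcase_abs; lra).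
assert (a ^ 2 <= (y - f) ^ 2).
{ rewrite <- (pow2_abs a), <- (pow2_abs (y - f)).
  apply pow_incr. split; [apply Rabs_pos| exact H1]. }
assert (b ^ 2 <= (f - g) ^ 2).
{ rewrite <- (pow2_abs b), <- (pow2_abs (f - g)).
  apply pow_incr. split; [apply Rabs_pos| exact H2]. }
assert (2 * (a * b) <= 4 * Rabs (f - g)).
{ assert (a * b <= Rabs a * Rabs b).
  { rewrite <- Rabs_mult. apply Rle_abs. }
  assert (Rabs a * Rabs b <= 2 * Rabs (f - g)).
  { apply Rle_trans with (2 * Rabs b).
    - apply Rmult_le_compat_r; [apply Rabs_pos|lra].
    - lra. }
  lra. }
assert ((a + b) ^ 2 = a ^ 2 + 2 * (a * b) + b ^ 2) by ring. lra.
Qed.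

Lemma cabs_sq z : cabs z ^ 2 = fst z ^ 2 + snd z ^ 2.
Proof. unfold cabs. apply pow2_sqrt. pose proof (pow2_ge_0 (fst z)); pose proof (pow2_ge_0 (snd z)); lra. Qed.

Lemma cabs_le_sq z e : cabs z <= e -> fst z ^ 2 + snd z ^ 2 <= e ^ 2.
Proof.
intros H. rewrite <- cabs_sq. apply pow_incr. split; [apply sqrt_pos|exact H].
Qed.

Lemma coord_le a b e : 0 <= e -> a ^ 2 + b ^ 2 <= e ^ 2 -> Rabs a <= e.
Proof.
intros He H. pose proof (pow2_ge_0 b).
destruct (Rle_dec (Rabs a) e) as [|Hn]; auto. exfalso.
assert (e ^ 2 < Rabs a ^ 2).
{ apply Rnot_le_lt in Hn. nra. }
assert (Rabs a ^ 2 = a ^ 2) by apply pow2_abs. lra.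
Qed.

Lemma cabs_le1 y : cabs y <= 1 -> -1 <= fst y <= 1 /\ -1 <= snd y <= 1.
Proof.
intros H. pose proof (cabs_le_sq _ _ H) as H2.
assert (Rabs (fst y) <= 1) by (apply (coord_le _ (snd y)); lra).
assert (Rabs (snd y) <= 1) by (apply (coord_le _ (fst y)); lra).
revert H0 H1. unfold Rabs. repeat destruct Rcase_abs; intros; lra.
Qed.

Lemma approx_round (y fz gz : Cpx) (e : R) : cabs y <= 1 -> 0 <= e <= 1 ->
  cabs (csub fz gz) <= e ->
  lossP (clipC gz) y <= cabs (csub y fz) ^ 2 + 9 * e.
Proof.
intros Hy He Hfg. destruct (cabs_le1 y Hy) as [Hy1 Hy2].
pose proof (cabs_le_sq _ _ Hfg) as Hsq. simpl in Hsq.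
assert (Rabs (fst fz - fst gz) <= e) by (apply (coord_le _ (snd fz - snd gz)); lra).
assert (Rabs (snd fz - snd gz) <= e) by (apply (coord_le _ (fst fz - fst gz)); lra).
rewrite cabs_sq. unfold lossP, clipC, csub; simpl.
pose proof (approx_coord (fst y) (fst fz) (fst gz) Hy1).
pose proof (approx_coord (snd y) (snd fz) (snd gz) Hy2).
assert (e ^ 2 <= e) by nra. lra.
Qed.

Lemma sq_le_le x y : 0 <= x -> 0 <= y -> x ^ 2 <= y ^ 2 -> x <= y.
Proof. intros. destruct (Rle_dec x y); auto. apply Rnot_le_lt in n. nra. Qed.

Lemma cabs_nonneg z : 0 <= cabs z.
Proof. apply sqrt_pos. Qed.

Lemma cabs_sq' z : cabs z ^ 2 = fst z ^ 2 + snd z ^ 2.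
Proof. unfold cabs. apply pow2_sqrt. pose proof (pow2_ge_0 (fst z)); pose proof (pow2_ge_0 (snd z)); lra. Qed.

Lemma cabs_sym a b : cabs (csub a b) = cabs (csub b a).
Proof. unfold cabs, csub; simpl. f_equal. ring. Qed.

Lemma cabs_tri a b c : cabs (csub a c) <= cabs (csub a b) + cabs (csub b c).
Proof.
apply sq_le_le.
- apply cabs_nonneg.
- pose proof (cabs_nonneg (csub a b)); pose proof (cabs_nonneg (csub b c)); lra.
- set (u1 := fst a - fst b). set (u2 := snd a - snd b).
  set (v1 := fst b - fst c). set (v2 := snd b - snd c).
  assert (E1 : cabs (csub a c) ^ 2 = (u1 + v1) ^ 2 + (u2 + v2) ^ 2).
  { rewrite cabs_sq'. unfold csub, u1, u2, v1, v2; simpl. ring. }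
  assert (E2 : cabs (csub a b) ^ 2 = u1 ^ 2 + u2 ^ 2) by (rewrite cabs_sq'; reflexivity).
  assert (E3 : cabs (csub b c) ^ 2 = v1 ^ 2 + v2 ^ 2) by (rewrite cabs_sq'; reflexivity).
  set A := cabs (csub a b) in E2 *. set B := cabs (csub b c) in E3 *.
  assert (HA : 0 <= A) by apply cabs_nonneg. assert (HB : 0 <= B) by apply cabs_nonneg.
  assert (CS : (u1 * v1 + u2 * v2) ^ 2 <= (A * B) ^ 2).
  { assert ((A * B) ^ 2 = A ^ 2 * B ^ 2) by ring. rewrite H E2 E3.
    assert (0 <= (u1*v2-u2*v1)^2) by apply pow2_ge_0.
    assert ((u1 ^ 2 + u2 ^ 2) * (v1 ^ 2 + v2 ^ 2) - (u1 * v1 + u2 * v2) ^ 2 = (u1*v2-u2*v1)^2) by ring.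
    lra. }
  assert (u1 * v1 + u2 * v2 <= A * B).
  { destruct (Rle_dec (u1 * v1 + u2 * v2) 0). { nra. }
    apply sq_le_le; [lra| nra| exact CS]. }
  rewrite E1. assert ((A + B) ^ 2 = A ^ 2 + B ^ 2 + 2 * (A * B)) by ring.
  rewrite H0 E2 E3. nra.
Qed.

Lemma cabs_zero z : cabs (csub z z) = 0.
Proof. unfold cabs, csub; simpl. rewrite <- sqrt_0. f_equal. ring. Qed.

Section Nets.
Variable X : topologicalType.

Lemma net_exists (F : set (X -> Cpx)) e : sup_compact F -> 0 < e -> exists s, is_net F e s.
Proof.
intros [Hb Hc] He.
set (I := {g : X -> Cpx | F g}).
set (U := fun (i : I) => fun h => supdist_lt h (proj1_sig i) e).
destruct (Hc I U) as [s Hs].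
- intros i h _ [r' [Hr' Hle]]. exists (e - r'). split; [lra|].
  intros h' _ [r'' [Hr'' Hle']]. exists (r'' + r'). split; [lra|].
  intros x. eapply Rle_trans; [apply (cabs_tri _ (h x))|].
  rewrite cabs_sym. specialize (Hle x); specialize (Hle' x). lra.
- intros f Hf. exists (exist _ f Hf). exists 0. split; [lra|]. intros x. simpl. rewrite cabs_zero. lra.
- exists (map (@proj1_sig _ _) s). split.
  + intros g Hg. apply in_map_iff in Hg. destruct Hg as [i [<- _]]. exact (proj2_sig i).
  + intros f Hf. destruct (Hs f Hf) as [i [Hi [r' [Hr' Hle]]]].
    exists (proj1_sig i). split; [apply in_map; auto|].
    intros x. specialize (Hle x). lra.
Qed.

Lemma covnum_spec (F : set (X -> Cpx)) e : sup_compact F -> 0 < e ->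
  is_covnum F e (covnum F e).
Proof.
intros Hc He. destruct (net_exists F e Hc He) as [s0 Hs0].
assert (Hex : exists n, is_covnum F e n).
{ assert (forall n, (exists s, is_net F e s /\ length s = n) -> exists m, is_covnum F e m) as Hmin.
  { intros n. induction n as [n IH] using (well_founded_induction Wf_nat.lt_wf).
    intros Hn. destruct (Classical_Prop.classic (exists m, (m < n)%coq_nat /\ exists s, is_net F e s /\ length s = m)) as [[m [Hm Hs]]|Hno].
    - exact (IH m Hm Hs).
    - exists n. split; auto. intros s Hs.
      destruct (Nat.le_gt_cases n (length s)) as [|Hlt]; auto.
      exfalso. apply Hno. exists (length s). split; auto. exists s; auto. }
  apply (Hmin (length s0)). exists s0; auto. }
unfold covnum. apply (epsilon_spec (inhabits 0%nat) (fun n => is_covnum F e n) Hex).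
Qed.
End Nets.

Section Algo.
Variable X : topologicalType.
Variable F : set (X -> Cpx).

Definition eps (k : nat) : R := (/ 2) ^ k.
Definition netk (k : nat) : list (X -> Cpx) :=
  epsilon (inhabits nil) (fun s => is_net F (eps k) s /\ length s = covnum F (eps k)).
Definition len (k : nat) : nat := length (netk k).
Definition ck (k : nat) : R := / (INR (k + 1)%coq_nat * INR (k + 2)%coq_nat).
Definition wk (k : nat) : R := ck k / INR (len k).
Definition pe (k j : nat) (x : X) : Cpx := clipC (List.nth j (netk k) (fun _ => (0, 0)) x).
Definition Kn (n : nat) : nat := Nat.pow 2 n.
Definition DS (n : nat) (f : nat -> nat -> R) : R :=
  rsum (fun k => rsum (fun j => f k j) (len k)) (Kn n).
Definition vw (Dr : nat -> nat -> R) (k j : nat) : R := wk k * exp (- eta * Dr k j).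
Definition mix (Dr : nat -> nat -> R) (n : nat) (x : X) : Cpx :=
  (DS n (fun k j => vw Dr k j * fst (pe k j x)) / DS n (vw Dr),
   DS n (fun k j => vw Dr k j * snd (pe k j x)) / DS n (vw Dr)).

Fixpoint Dh (r : list (X * Cpx)) : nat -> nat -> R :=
  match r with
  | nil => fun _ _ => 0
  | (x, y) :: r' => fun k j => Dh r' k j +
      (if Nat.ltb k (Kn (length r'))
       then lossP (pe k j x) y - lossP (mix (Dh r') (length r') x) y else 0)
  end.

Definition Strat : strategy X := fun h x => mix (Dh (List.rev h)) (length h) x.


Lemma eps_pos k : 0 < eps k.
Proof. unfold eps. apply pow_lt. lra. Qed.

Lemma netk_spec k : sup_compact F -> is_net F (eps k) (netk k) /\ len k = covnum F (eps k).
Proof.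
intros Hc. pose proof (covnum_spec X F (eps k) Hc (eps_pos k)) as [[s [Hs Hl]] _].
unfold len, netk. apply (epsilon_spec (inhabits nil) (fun s => is_net F (eps k) s /\ length s = covnum F (eps k))).
exists s; auto.
Qed.

Lemma len_pos k f0 : sup_compact F -> F f0 -> (0 < len k)%coq_nat.
Proof.
intros Hc Hf. destruct (netk_spec k Hc) as [[_ Hn] _].
destruct (Hn f0 Hf) as [g [Hg _]]. unfold len. destruct (netk k); simpl in *; [contradiction| lia].
Qed.

Lemma INR_S1 k : INR (k + 1)%coq_nat = INR k + 1.
Proof. rewrite plus_INR. simpl. lra. Qed.
Lemma INR_S2 k : INR (k + 2)%coq_nat = INR k + 2.
Proof. rewrite plus_INR. simpl. lra. Qed.

Lemma ck_pos k : 0 < ck k.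
Proof. unfold ck. rewrite INR_S1 INR_S2. pose proof (pos_INR k). apply Rinv_0_lt_compat. nra. Qed.

Lemma ck_eq k : ck k = / (INR k + 1) - / (INR k + 2).
Proof. unfold ck. rewrite INR_S1 INR_S2. pose proof (pos_INR k). field. lra. Qed.

Lemma rsum_ck K : rsum ck K = 1 - / (INR K + 1).
Proof.
induction K as [|K IH].
- simpl. lra.
- change (rsum ck (S K)) with (rsum ck K + ck K). rewrite IH ck_eq S_INR.
  replace (INR K + 1 + 1) with (INR K + 2) by ring. lra.
Qed.

Lemma rsum_ck_le K : rsum ck K <= 1.
Proof. rewrite rsum_ck. pose proof (pos_INR K). assert (0 < / (INR K + 1)) by (apply Rinv_0_lt_compat; lra). lra. Qed.

Lemma rsum_const c n : rsum (fun _ => c) n = c * INR n.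
Proof. induction n as [|n IH]; [simpl; lra|]. change (rsum (fun _ => c) (S n)) with (rsum (fun _ => c) n + c). rewrite IH S_INR. ring. Qed.

Lemma wk_pos k f0 : sup_compact F -> F f0 -> 0 < wk k.
Proof.
intros Hc Hf. pose proof (len_pos k f0 Hc Hf). unfold wk. apply Rdiv_lt_0_compat; [apply ck_pos|].
apply lt_0_INR. exact H.
Qed.

Lemma sum_wk k f0 : sup_compact F -> F f0 -> rsum (fun _ => wk k) (len k) = ck k.
Proof.
intros Hc Hf. pose proof (len_pos k f0 Hc Hf). rewrite rsum_const. unfold wk.
assert (0 < INR (len k)) by (apply lt_0_INR; exact H). field. lra.
Qed.

Lemma DS_le n f g : (forall k j, (k < Kn n)%coq_nat -> (j < len k)%coq_nat -> f k j <= g k j) ->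
  DS n f <= DS n g.
Proof. intros H. unfold DS. apply rsum_le. intros k Hk. apply rsum_le. intros j Hj. auto. Qed.

Lemma DS_ext n f g : (forall k j, (k < Kn n)%coq_nat -> (j < len k)%coq_nat -> f k j = g k j) ->
  DS n f = DS n g.
Proof. intros H. unfold DS. apply rsum_ext. intros k Hk. apply rsum_ext. intros j Hj. auto. Qed.

Lemma DS_plus n f g : DS n (fun k j => f k j + g k j) = DS n f + DS n g.
Proof.
unfold DS. rewrite <- rsum_plus. apply rsum_ext. intros k _. apply rsum_plus.
Qed.

Lemma DS_scal n c f : DS n (fun k j => c * f k j) = c * DS n f.
Proof.
unfold DS. rewrite <- rsum_scal. apply rsum_ext. intros k _. apply rsum_scal.
Qed.

Lemma DS_nonneg n f : (forall k j, (k < Kn n)%coq_nat -> (j < len k)%coq_nat -> 0 <= f k j) -> 0 <= DS n f.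
Proof. intros H. unfold DS. apply rsum_nonneg. intros k Hk. apply rsum_nonneg. intros j Hj. auto. Qed.

Lemma DS_term n f k j : (forall k j, (k < Kn n)%coq_nat -> (j < len k)%coq_nat -> 0 <= f k j) ->
  (k < Kn n)%coq_nat -> (j < len k)%coq_nat -> f k j <= DS n f.
Proof.
intros H Hk Hj. unfold DS.
apply Rle_trans with (rsum (fun j => f k j) (len k)).
- apply (rsum_term (fun j => f k j)); auto.
- apply (rsum_term (fun k => rsum (fun j => f k j) (len k))); auto.
  intros k' Hk'. apply rsum_nonneg. intros; auto.
Qed.

Lemma Kn_pos n : (0 < Kn n)%coq_nat.
Proof. unfold Kn. apply Nat.neq_0_lt_0. apply Nat.pow_nonzero. lia. Qed.

Lemma Kn_S n : Kn (S n) = (Kn n + Kn n)%coq_nat.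
Proof. unfold Kn. rewrite Nat.pow_succ_r'. lia. Qed.

Lemma Kn_mono a b : (a <= b)%coq_nat -> (Kn a <= Kn b)%coq_nat.
Proof. intros H. unfold Kn. apply Nat.pow_le_mono_r; lia. Qed.

End Algo.

Section Play.
Variable X : topologicalType.
Variable F : set (X -> Cpx).
Hypothesis Hc : sup_compact F.
Variable f0 : X -> Cpx.
Hypothesis Hf0 : F f0.
Variable xs : nat -> X.
Variable ys : nat -> Cpx.
Hypothesis Hys : forall n, cabs (ys n) <= 1.

Definition hist (n : nat) := List.map (fun i => (xs i, ys i)) (List.seq 0 n).
Definition Dn (n : nat) := Dh X F (List.rev (hist n)).
Definition mu (n : nat) := pred_at (Strat X F) xs ys n.

Lemma length_hist n : length (hist n) = n.
Proof. unfold hist. rewrite length_map length_seq. reflexivity. Qed.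

Lemma mu_eq n : mu n = mix X F (Dn n) n (xs n).
Proof. unfold mu, pred_at, Strat, Dn. fold (hist n). rewrite length_hist. reflexivity. Qed.

Lemma Dn_S n k j : Dn (S n) k j = Dn n k j +
  (if Nat.ltb k (Kn n) then lossP (pe X F k j (xs n)) (ys n) - lossP (mu n) (ys n) else 0).
Proof.
unfold Dn, hist. rewrite seq_S map_app rev_app_distr. simpl.
rewrite length_rev length_map length_seq. rewrite mu_eq. unfold Dn, hist. reflexivity.
Qed.

Lemma Dn_sleep n k j : (forall t, (t < n)%coq_nat -> (Kn t <= k)%coq_nat) -> Dn n k j = 0.
Proof.
induction n as [|n IH]; intros H.
- reflexivity.
- rewrite Dn_S IH; [|intros; apply H; lia].
  assert (Nat.ltb k (Kn n) = false) as ->.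
  { apply Nat.ltb_ge. apply H. lia. }
  lra.
Qed.

Lemma pe_box k j x : -1 <= fst (pe X F k j x) <= 1 /\ -1 <= snd (pe X F k j x) <= 1.
Proof. unfold pe, clipC; simpl. split; apply clip_range. Qed.

Lemma vw_pos n k j : 0 < vw X F (Dn n) k j.
Proof. unfold vw. apply Rmult_lt_0_compat; [apply (wk_pos X F k f0 Hc Hf0)| apply exp_pos]. Qed.

Lemma den_pos n : 0 < DS X F n (vw X F (Dn n)).
Proof.
apply Rlt_le_trans with (vw X F (Dn n) 0 0); [apply vw_pos|].
apply DS_term.
- intros; apply Rlt_le, vw_pos.
- apply Kn_pos.
- apply (len_pos X F 0 f0 Hc Hf0).
Qed.

Lemma div_box N D : 0 < D -> - D <= N <= D -> -1 <= N / D <= 1.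
Proof.
intros HD [H1 H2]. assert (0 < / D) by (apply Rinv_0_lt_compat; lra).
assert (D * / D = 1) by (field; lra). unfold Rdiv.
split.
- assert (- D * / D <= N * / D) by (apply Rmult_le_compat_r; lra). lra.
- assert (N * / D <= D * / D) by (apply Rmult_le_compat_r; lra). lra.
Qed.

Lemma mu_box n : -1 <= fst (mu n) <= 1 /\ -1 <= snd (mu n) <= 1.
Proof.
rewrite mu_eq. unfold mix; cbn [fst snd]. pose proof (den_pos n) as HD.
split; apply div_box; auto; split.
- replace (- DS X F n (vw X F (Dn n))) with (DS X F n (fun k j => -1 * vw X F (Dn n) k j)) by (rewrite DS_scal; ring).
  apply DS_le. intros k j _ _. destruct (pe_box k j (xs n)) as [[? ?] [? ?]]. pose proof (vw_pos n k j). nra.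
- apply DS_le. intros k j _ _. destruct (pe_box k j (xs n)) as [[? ?] [? ?]]. pose proof (vw_pos n k j). nra.
- replace (- DS X F n (vw X F (Dn n))) with (DS X F n (fun k j => -1 * vw X F (Dn n) k j)) by (rewrite DS_scal; ring).
  apply DS_le. intros k j _ _. destruct (pe_box k j (xs n)) as [[? ?] [? ?]]. pose proof (vw_pos n k j). nra.
- apply DS_le. intros k j _ _. destruct (pe_box k j (xs n)) as [[? ?] [? ?]]. pose proof (vw_pos n k j). nra.
Qed.


Lemma loss_bound p y : -1 <= fst p <= 1 -> -1 <= snd p <= 1 ->
  -1 <= fst y <= 1 -> -1 <= snd y <= 1 -> 0 <= lossP p y <= 8.
Proof.
intros [? ?] [? ?] [? ?] [? ?]. unfold lossP.
assert (H7 : (fst y - fst p) ^ 2 <= 4).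
{ assert (4 - (fst y - fst p) ^ 2 = (2 - (fst y - fst p)) * (fst y - fst p + 2)) by ring.
  assert (0 <= (2 - (fst y - fst p)) * (fst y - fst p + 2)).
  { apply Rmult_le_pos; lra. }
  lra. }
assert (H8 : (snd y - snd p) ^ 2 <= 4).
{ assert (4 - (snd y - snd p) ^ 2 = (2 - (snd y - snd p)) * (snd y - snd p + 2)) by ring.
  assert (0 <= (2 - (snd y - snd p)) * (snd y - snd p + 2)).
  { apply Rmult_le_pos; lra. }
  lra. }
pose proof (pow2_ge_0 (fst y - fst p)). pose proof (pow2_ge_0 (snd y - snd p)). lra.
Qed.

Lemma step n :
  DS X F n (fun k j => vw X F (Dn n) k j *
     exp (- eta * (lossP (pe X F k j (xs n)) (ys n) - lossP (mu n) (ys n))))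
  <= DS X F n (vw X F (Dn n)).
Proof.
set (v := vw X F (Dn n)). set (x := xs n). set (y := ys n).
destruct (mu_box n) as [Hm1 Hm2].
destruct (cabs_le1 (ys n) (Hys n)) as [Hy1 Hy2].
set (m := mu n) in Hm1, Hm2 |- *.
set (c1 := 2 * eta * (fst y - fst m)). set (c2 := 2 * eta * (snd y - snd m)).
apply Rle_trans with (DS X F n (fun k j => v k j + c1 * (v k j * fst (pe X F k j x))
    + c2 * (v k j * snd (pe X F k j x)) + (- (c1 * fst m + c2 * snd m)) * v k j)).
- apply DS_le. intros k j _ _.
  destruct (pe_box k j x) as [Hp1 Hp2].
  pose proof (tangent (fst y) (snd y) (fst m) (snd m) (fst (pe X F k j x)) (snd (pe X F k j x))
    Hy1 Hy2 Hm1 Hm2 Hp1 Hp2) as Ht.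
  assert (Hv : 0 < v k j) by apply vw_pos.
  unfold lossP.
  apply Rle_trans with (v k j * (1 + 2 * eta * ((fst y - fst m) * (fst (pe X F k j x) - fst m) + (snd y - snd m) * (snd (pe X F k j x) - snd m)))).
  + apply Rmult_le_compat_l; [lra| exact Ht].
  + unfold c1, c2. lra.
- rewrite !DS_plus !DS_scal.
  assert (HA : 0 < DS X F n v) by apply den_pos.
  assert (E1 : fst m = DS X F n (fun k j => v k j * fst (pe X F k j x)) / DS X F n v)
    by (unfold m; rewrite mu_eq; reflexivity).
  assert (E2 : snd m = DS X F n (fun k j => v k j * snd (pe X F k j x)) / DS X F n v)
    by (unfold m; rewrite mu_eq; reflexivity).
  assert (F1 : fst m * DS X F n v = DS X F n (fun k j => v k j * fst (pe X F k j x)))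
    by (rewrite E1; field; lra).
  assert (F2 : snd m * DS X F n v = DS X F n (fun k j => v k j * snd (pe X F k j x)))
    by (rewrite E2; field; lra).
  rewrite <- F1, <- F2. lra.
Qed.

Definition Vn (n : nat) : R :=
  DS X F n (vw X F (Dn n)) + (1 - rsum ck (Kn n)).

Lemma G_sleep n k : (forall t, (t < n)%coq_nat -> (Kn t <= k)%coq_nat) ->
  rsum (fun j => vw X F (Dn n) k j) (len X F k) = ck k.
Proof.
intros Hk. rewrite <- (sum_wk X F k f0 Hc Hf0). apply rsum_ext. intros j _.
unfold vw. rewrite Dn_sleep.
- rewrite Rmult_0_r exp_0. ring.
- exact Hk.
Qed.

Lemma V0 : Vn 0 = 1.
Proof.
unfold Vn, DS. change (Kn 0) with 1%nat. simpl.
rewrite (G_sleep 0 0); [|intros; lia]. lra.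
Qed.

Lemma VS n : Vn (S n) <= Vn n.
Proof.
unfold Vn. unfold DS at 1. rewrite Kn_S !rsum_split.
rewrite (rsum_ext (fun i => rsum (fun j => vw X F (Dn (S n)) (Kn n + i)%coq_nat j) (len X F (Kn n + i)%coq_nat)) (fun i => ck (Kn n + i)%coq_nat)).
2:{ intros i _. apply G_sleep. intros t Ht. apply Nat.le_trans with (Kn n); [apply Kn_mono; lia| lia]. }
assert (H : rsum (fun k => rsum (fun j => vw X F (Dn (S n)) k j) (len X F k)) (Kn n)
  = DS X F n (fun k j => vw X F (Dn n) k j *
     exp (- eta * (lossP (pe X F k j (xs n)) (ys n) - lossP (mu n) (ys n))))).
{ unfold DS. apply rsum_ext. intros k Hk. apply rsum_ext. intros j _.
  unfold vw. rewrite Dn_S.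
  assert (Nat.ltb k (Kn n) = true) as -> by (apply Nat.ltb_lt; exact Hk).
  rewrite Rmult_assoc -exp_plus. f_equal. f_equal. ring. }
rewrite H. pose proof (step n). lra.
Qed.

Lemma V_le1 n : Vn n <= 1.
Proof. induction n as [|n IH]; [rewrite V0; lra| pose proof (VS n); lra]. Qed.

Lemma final_w N k j : (k < Kn N)%coq_nat -> (j < len X F k)%coq_nat ->
  wk X F k * exp (- eta * Dn N k j) <= 1.
Proof.
intros Hk Hj.
assert (vw X F (Dn N) k j <= DS X F N (vw X F (Dn N))).
{ apply DS_term; auto. intros; apply Rlt_le, vw_pos. }
pose proof (V_le1 N). unfold Vn in H0. pose proof (rsum_ck_le (Kn N)).
change (wk X F k * exp (- eta * Dn N k j)) with (vw X F (Dn N) k j). lra.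
Qed.

Lemma Dn_formula N k j : Dn N k j = rsum (fun t => if Nat.ltb k (Kn t)
   then lossP (pe X F k j (xs t)) (ys t) - lossP (mu t) (ys t) else 0) N.
Proof.
induction N as [|N IH]; [reflexivity|]. rewrite Dn_S IH. reflexivity.
Qed.

Lemma regret N k j s0 : (k < Kn N)%coq_nat -> (j < len X F k)%coq_nat -> (k < Kn s0)%coq_nat ->
  rsum (fun t => lossP (mu t) (ys t)) N <=
  rsum (fun t => lossP (pe X F k j (xs t)) (ys t)) N + 64 * (- ln (wk X F k)) + 8 * INR s0.
Proof.
intros Hk Hj Hs.
pose proof (final_w N k j Hk Hj) as Hw.
assert (Hwp : 0 < wk X F k) by apply (wk_pos X F k f0 Hc Hf0).
assert (HD : - Dn N k j <= 64 * (- ln (wk X F k))).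
{ assert (Hl : ln (wk X F k * exp (- eta * Dn N k j)) <= 0).
  { destruct (Rle_lt_or_eq_dec _ _ Hw) as [Hlt|Heq].
    - rewrite <- ln_1. apply Rlt_le, ln_increasing; [apply Rmult_lt_0_compat; [lra| apply exp_pos]| exact Hlt].
    - rewrite Heq ln_1. lra. }
  rewrite ln_mult in Hl; [|lra| apply exp_pos]. rewrite ln_exp in Hl. unfold eta in Hl. lra. }
rewrite Dn_formula in HD.
set (le := fun t => lossP (pe X F k j (xs t)) (ys t)) in HD |- *.
set (lm := fun t => lossP (mu t) (ys t)) in HD |- *.
assert (E : rsum lm N = rsum le N + (- rsum (fun t => if Nat.ltb k (Kn t) then le t - lm t else 0) N)
   + rsum (fun t => if Nat.ltb k (Kn t) then 0 else lm t - le t) N).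
{ assert (rsum lm N = rsum (fun t => le t + - (if Nat.ltb k (Kn t) then le t - lm t else 0)
     + (if Nat.ltb k (Kn t) then 0 else lm t - le t)) N).
  { apply rsum_ext. intros t _. destruct (Nat.ltb k (Kn t)); ring. }
  rewrite H !rsum_plus. f_equal. f_equal.
  rewrite (rsum_ext _ (fun t => -1 * (if Nat.ltb k (Kn t) then le t - lm t else 0))); [|intros; ring].
  rewrite rsum_scal. ring. }
assert (Hsl : rsum (fun t => if Nat.ltb k (Kn t) then 0 else lm t - le t) N <= 8 * INR s0).
{ apply rsum_bound_min; [lra| |].
  - intros t. destruct (Nat.ltb k (Kn t)); [lra|].
    destruct (mu_box t) as [? ?]. destruct (pe_box k j (xs t)) as [? ?].
    destruct (cabs_le1 (ys t) (Hys t)) as [? ?].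
    pose proof (loss_bound (mu t) (ys t)). pose proof (loss_bound (pe X F k j (xs t)) (ys t)).
    unfold lm, le. intuition lra.
  - intros t Ht. assert (Nat.ltb k (Kn t) = true) as ->; [|lra].
    apply Nat.ltb_lt. apply Nat.lt_le_trans with (Kn s0); auto. apply Kn_mono; auto. }
subst le lm. cbv beta in *. lra.
Qed.

End Play.

Lemma ln_le a b : 0 < a -> a <= b -> ln a <= ln b.
Proof.
intros Ha Hab. destruct (Rle_lt_or_eq_dec _ _ Hab) as [Hlt| ->].
- apply Rlt_le, ln_increasing; auto.
- lra.
Qed.

Lemma ln_le_self u : 0 < u -> ln u <= u.
Proof. intros Hu. pose proof (exp_ineq1_le (ln u)). rewrite exp_ln in H; auto. lra. Qed.

Lemma ln2_pos : 0 < ln 2.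
Proof. pose proof ln_lt_2. lra. Qed.

Lemma Rpower_pos x y : 0 < Rpower x y.
Proof. unfold Rpower. apply exp_pos. Qed.

Lemma exp_mono_le a b : a <= b -> exp a <= exp b.
Proof. intros H. destruct (Rle_lt_or_eq_dec _ _ H) as [Hlt| ->]; [apply Rlt_le, exp_increasing; auto| lra]. Qed.

Lemma Rpower_succ_le l M : 0 < M -> 0 < l -> 2 * M <= l -> Rpower (l + 1) M <= 2 * Rpower l M.
Proof.
intros HM Hl HlM. unfold Rpower.
assert (Hln : ln (l + 1) <= ln l + / l).
{ replace (l + 1) with (l * (1 + / l)) by (field; lra).
  rewrite ln_mult; [| lra| assert (0 < / l) by (apply Rinv_0_lt_compat; lra); lra].
  assert (ln (1 + / l) <= / l).
  { pose proof (exp_ineq1_le (/ l)).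
    assert (0 < / l) by (apply Rinv_0_lt_compat; lra).
    pose proof (ln_le (1 + / l) (exp (/ l)) ltac:(lra) H). rewrite ln_exp in H1. exact H1. }
  lra. }
assert (HMl : M * / l <= / 2).
{ apply Rmult_le_reg_r with l; [lra|]. rewrite Rmult_assoc Rinv_l; [|lra]. lra. }
apply Rle_trans with (exp (M * ln l + / 2)).
- apply exp_mono_le. assert (M * ln (l + 1) <= M * (ln l + / l)) by (apply Rmult_le_compat_l; lra). nra.
- rewrite exp_plus. rewrite Rmult_comm. apply Rmult_le_compat_r; [apply Rlt_le, exp_pos|].
  pose proof ln_lt_2. rewrite <- (exp_ln 2) at 2; [|lra]. apply Rlt_le, exp_increasing. lra.
Qed.

Lemma asym_log (M L A B : R) : 0 < M -> 0 < L -> 0 <= A -> 0 <= B ->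
  exists l1, forall l, l1 <= l -> A + B * ln (l + 3) <= L * Rpower l M.
Proof.
intros HM HL HA HB.
set (K := A + B + B * (2 / M)).
set (Bd := K / L + 1).
assert (HK : 0 <= K).
{ unfold K. assert (0 <= B * (2 / M)) by (apply Rmult_le_pos; [lra| apply Rlt_le, Rdiv_lt_0_compat; lra]). lra. }
assert (HBd : 1 <= Bd) by (unfold Bd; assert (0 <= K / L) by (apply Rmult_le_pos; [lra| apply Rlt_le, Rinv_0_lt_compat; lra]); lra).
exists (Rmax 3 (Rpower Bd (2 / M))). intros l Hl.
assert (Hl3 : 3 <= l) by (eapply Rle_trans; [apply Rmax_l| exact Hl]).
assert (HlB : Rpower Bd (2 / M) <= l) by (eapply Rle_trans; [apply Rmax_r| exact Hl]).
set (u := Rpower l (M / 2)).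
assert (Hu : Bd <= u).
{ unfold u. rewrite <- (Rpower_1 Bd) at 1; [|lra].
  replace 1 with ((2 / M) * (M / 2)) by (field; lra).
  rewrite <- Rpower_mult. apply Rle_Rpower_l; [apply Rlt_le, Rdiv_lt_0_compat; lra|].
  split; [apply Rpower_pos| exact HlB]. }
assert (HuM : Rpower l M = u * u).
{ unfold u. rewrite <- Rpower_plus. f_equal. field. }
assert (Hlnl : ln l <= (2 / M) * u).
{ assert (ln u = M / 2 * ln l) by (unfold u; apply ln_Rpower).
  pose proof (ln_le_self u ltac:(lra)).
  assert (ln l = (2 / M) * ln u) by (rewrite H; field; lra).
  rewrite H1. apply Rmult_le_compat_l; [apply Rlt_le, Rdiv_lt_0_compat; lra| exact H0]. }
assert (Hl3' : ln (l + 3) <= 1 + ln l).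
{ apply Rle_trans with (ln (2 * l)); [apply ln_le; lra|].
  rewrite ln_mult; [|lra|lra]. pose proof ln_lt_2.
  assert (ln 2 < 1).
  { rewrite <- ln_exp. apply ln_increasing; [lra|]. pose proof (exp_ineq1 1 ltac:(lra)). lra. }
  lra. }
assert (A + B * ln (l + 3) <= K * u).
{ apply Rle_trans with (A + B * (1 + (2 / M) * u)).
  - assert (B * ln (l + 3) <= B * (1 + 2 / M * u)) by (apply Rmult_le_compat_l; lra). lra.
  - unfold K. assert (0 <= B * (2 / M)) by (apply Rmult_le_pos; [lra| apply Rlt_le, Rdiv_lt_0_compat; lra]).
    nra. }
rewrite HuM.
assert (K * u <= L * (u * u)).
{ assert (K <= L * u).
  { unfold Bd in Hu. apply Rmult_le_reg_r with (/ L); [apply Rinv_0_lt_compat; lra|].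
    replace (L * u * / L) with u by (field; lra). unfold Rdiv in Hu. lra. }
  nra. }
lra.
Qed.

Lemma asym_main (M L : R) : 0 < M -> 0 < L -> exists l0, 0 < l0 /\
  forall l k, l0 <= l -> 0 < k <= l + 1 ->
  17 + 144 * ln (k + 2) + 128 * L * Rpower k M <= 300 * L * Rpower l M.
Proof.
intros HM HL.
destruct (asym_log M (44 * L) 17 144 HM ltac:(lra) ltac:(lra) ltac:(lra)) as [l1 Hl1].
exists (Rmax 1 (Rmax (2 * M) l1)). split; [pose proof (Rmax_l 1 (Rmax (2 * M) l1)); lra|].
intros l k Hl [Hk0 Hk].
assert (H1 : 1 <= l) by (eapply Rle_trans; [apply Rmax_l| exact Hl]).
assert (H2 : 2 * M <= l) by (eapply Rle_trans; [|exact Hl]; eapply Rle_trans; [apply Rmax_l| apply Rmax_r]).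
assert (H3 : l1 <= l) by (eapply Rle_trans; [|exact Hl]; eapply Rle_trans; [apply Rmax_r| apply Rmax_r]).
pose proof (Hl1 l H3) as Hlog.
assert (Hp : Rpower k M <= 2 * Rpower l M).
{ apply Rle_trans with (Rpower (l + 1) M).
  - apply Rle_Rpower_l; lra.
  - apply Rpower_succ_le; lra. }
assert (ln (k + 2) <= ln (l + 3)) by (apply ln_le; lra).
assert (128 * L * Rpower k M <= 256 * L * Rpower l M).
{ assert (L * Rpower k M <= L * (2 * Rpower l M)) by (apply Rmult_le_compat_l; lra). lra. }
lra.
Qed.

Lemma log2_pow2 k : log2 (1 / eps k) = INR k.
Proof.
unfold log2, eps. rewrite pow_inv.
assert (0 < 2 ^ k) by (apply pow_lt; lra).
replace (1 / / 2 ^ k) with (2 ^ k) by (field; lra).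
rewrite ln_pow; [|lra]. pose proof ln2_pos. field. lra.
Qed.

Lemma eps_lt k d : (forall n, (n >= k)%coq_nat -> Rabs ((/ 2) ^ n) < d) -> forall n, (k <= n)%coq_nat -> eps n < d.
Proof.
intros H n Hn. specialize (H n Hn). unfold eps. rewrite Rabs_pos_eq in H; auto.
apply pow_le. lra.
Qed.

Lemma entropy_bound (X : topologicalType) (F : set (X -> Cpx)) (M L d : R) k :
  0 < M -> (1 <= k)%coq_nat -> 0 < eps k -> eps k < d -> eps k < 1 ->
  (forall e, 0 < e < d -> entropy F e / rpow (log2 (1 / e)) M <= L + L) ->
  entropy F (eps k) <= 2 * L * Rpower (INR k) M.
Proof.
intros HM Hk He1 He2 He3 Hb.
specialize (Hb (eps k) (conj He1 He2)).
rewrite log2_pow2 in Hb.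
assert (Hkp : 0 < INR k) by (apply lt_0_INR; lia).
assert (Er : rpow (INR k) M = Rpower (INR k) M).
{ unfold rpow. destruct (Rlt_dec 0 (INR k)); [reflexivity| lra]. }
rewrite Er in Hb. pose proof (Rpower_pos (INR k) M) as Hp.
assert (entropy F (eps k) = entropy F (eps k) / Rpower (INR k) M * Rpower (INR k) M) by (field; lra).
rewrite H. assert (entropy F (eps k) / Rpower (INR k) M * Rpower (INR k) M <= (L + L) * Rpower (INR k) M)
  by (apply Rmult_le_compat_r; lra).
lra.
Qed.

Lemma log2_nat_bound k : (0 < k)%coq_nat -> INR (Nat.log2 k) <= 2 * ln (INR k + 2).
Proof.
intros Hk. destruct (Nat.log2_spec k Hk) as [H1 _].
apply le_INR in H1. rewrite pow_INR in H1. simpl in H1.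
assert (0 < 2 ^ Nat.log2 k) by (apply pow_lt; lra).
pose proof (ln_le _ _ H H1) as Hl. rewrite ln_pow in Hl; [|lra].
pose proof ln_lt_2. pose proof (pos_INR (Nat.log2 k)).
assert (ln (INR k) <= ln (INR k + 2)) by (apply ln_le; [apply lt_0_INR; lia| lra]).
nra.
Qed.

Theorem corollary4 :
  exists C : R, 0 < C /\
  forall (X : topologicalType), inhabited X ->
  forall (F : set (X -> Cpx)) (M L : R),
    sup_compact F -> 0 < M ->
    is_limsup0 (fun e => entropy F e / rpow (log2 (1 / e)) M) L ->
    0 < L ->
    exists S : strategy X,
      forall f, F f ->
      exists N0 : nat, forall (N : nat), (N0 <= N)%coq_nat ->
      forall (xs : nat -> X) (ys : nat -> Cpx),
        (forall n, cabs (ys n) <= 1) ->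
        rsum (fun n => cabs (csub (ys n) (pred_at S xs ys n)) ^ 2) N
        <= rsum (fun n => cabs (csub (ys n) (f (xs n))) ^ 2) N
           + C * L * rpow (log2 (INR N)) M.
Proof.
exists 300. split; [lra|]. intros X _ F M L Hc HM Hlim HL.
exists (Strat X F). intros f Hf.
destruct Hlim as [Hup _]. destruct (Hup L HL) as [d [Hd Hbd]].
assert (Hmd : 0 < Rmin d 1) by (apply Rmin_glb_lt; lra).
destruct (pow_lt_1_zero (/ 2) ltac:(rewrite Rabs_pos_eq; lra) (Rmin d 1) Hmd) as [k0 Hk0].
set (k1 := Nat.max k0 1).
assert (Hent : forall k, (k1 <= k)%coq_nat -> entropy F (eps k) <= 2 * L * Rpower (INR k) M).
{ intros k Hk. pose proof (eps_lt k0 (Rmin d 1) Hk0 k ltac:(unfold k1 in Hk; lia)) as He.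
  apply (entropy_bound X F M L d k HM ltac:(unfold k1 in Hk; lia) (eps_pos k)).
  - pose proof (Rmin_l d 1). lra.
  - pose proof (Rmin_r d 1). lra.
  - intros e He'. apply Hbd. exact He'. }
destruct (asym_main M L HM HL) as [l0 [Hl0 Hasym]].
destruct (INR_unbounded (Rpower 2 l0)) as [N1 HN1].
exists (Nat.max (Nat.max 2 (Kn k1)) N1). intros N HN xs ys Hys.
assert (HN2 : (2 <= N)%coq_nat) by lia.
assert (HNk : (Kn k1 <= N)%coq_nat) by lia.
assert (HNN1 : (N1 <= N)%coq_nat) by lia.
set (k := Nat.log2_up N).
assert (Hk1 : (k1 <= k)%coq_nat).
{ unfold k. rewrite <- (Nat.log2_up_pow2 k1); [|lia]. apply Nat.log2_up_le_mono. exact HNk. }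
assert (Hkpos : (1 <= k)%coq_nat) by (unfold k1 in Hk1; lia).
assert (HNle : (N <= Nat.pow 2 k)%coq_nat) by (apply (Nat.log2_log2_up_spec N); lia).
assert (Hpred : (Nat.pow 2 (Nat.pred k) < N)%coq_nat) by (apply (Nat.log2_up_spec N); lia).
assert (HkN : (k < Kn N)%coq_nat).
{ apply Nat.lt_trans with N. - apply Nat.log2_up_lt_lin; lia. - apply Nat.pow_gt_lin_r; lia. }
destruct (netk_spec X F k Hc) as [[Hin Hcov] Hlen].
destruct (Hcov f Hf) as [g [Hg Hfg]].
destruct (In_nth (netk X F k) g (fun _ => (0, 0)) Hg) as [j [Hj Hnth]].
set (s0 := S (Nat.log2 k)).
assert (Hs0 : (k < Kn s0)%coq_nat) by (apply (Nat.log2_spec k); lia).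
pose proof (regret X F Hc f Hf xs ys Hys N k j s0 HkN Hj Hs0) as Hreg.
assert (ELHS : rsum (fun n => cabs (csub (ys n) (pred_at (Strat X F) xs ys n)) ^ 2) N
   = rsum (fun t => lossP (mu X F xs ys t) (ys t)) N).
{ apply rsum_ext. intros t _. unfold lossP, mu. rewrite cabs_sq. unfold csub. cbn [fst snd]. reflexivity. }
rewrite ELHS.
assert (Hek : eps k < 1).
{ pose proof (eps_lt k0 (Rmin d 1) Hk0 k ltac:(unfold k1 in Hk1; lia)). pose proof (Rmin_r d 1). lra. }
pose proof (eps_pos k) as Hep.
assert (Happ : rsum (fun t => lossP (pe X F k j (xs t)) (ys t)) N <=
   rsum (fun n => cabs (csub (ys n) (f (xs n))) ^ 2) N + 9 * eps k * INR N).
{ apply Rle_trans with (rsum (fun t => cabs (csub (ys t) (f (xs t))) ^ 2 + 9 * eps k) N).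
  - apply rsum_le. intros t _. unfold pe. rewrite Hnth. apply approx_round; [apply Hys| lra| apply Hfg].
  - rewrite rsum_plus rsum_const. lra. }
assert (HeN : eps k * INR N <= 1).
{ apply le_INR in HNle. rewrite pow_INR in HNle. replace (INR 2) with 2 in HNle by (simpl; lra).
  assert (eps k * 2 ^ k = 1).
  { unfold eps. rewrite <- Rpow_mult_distr. replace (/ 2 * 2) with 1 by field. apply pow1. }
  assert (eps k * INR N <= eps k * 2 ^ k) by (apply Rmult_le_compat_l; lra). lra. }
assert (Hlenp : (0 < len X F k)%coq_nat) by (apply (len_pos X F k f Hc Hf)).
set (a := INR (k + 1)%coq_nat). set (b := INR (k + 2)%coq_nat). set (c := INR (len X F k)).
assert (Ha : a = INR k + 1) by apply INR_S1.
assert (Hb : b = INR k + 2) by apply INR_S2.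
assert (Hc1 : 1 <= c) by (unfold c; apply (le_INR 1); lia).
pose proof (pos_INR k) as Hk0'.
assert (Hw : - ln (wk X F k) = ln a + ln b + ln c).
{ assert (wk X F k = / (a * b * c)) by (unfold wk, ck; fold a b c; field; repeat split; lra).
  rewrite H ln_Rinv; [|apply Rmult_lt_0_compat; [apply Rmult_lt_0_compat|]; lra].
  rewrite !ln_mult; try lra; apply Rmult_lt_0_compat; lra. }
assert (Hlna : ln a <= ln (INR k + 2)) by (apply ln_le; lra).
assert (Hlnb : ln b = ln (INR k + 2)) by (rewrite Hb; reflexivity).
assert (Hln2 : ln 2 < 1).
{ rewrite <- (ln_exp 1). apply ln_increasing; [lra|]. pose proof (exp_ineq1 1 ltac:(lra)). lra. }
pose proof ln2_pos.
assert (Hlnc : ln c <= 2 * L * Rpower (INR k) M).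
{ apply Rle_trans with (entropy F (eps k)); [|apply Hent; exact Hk1].
  unfold entropy, log2. rewrite <- Hlen. fold c.
  assert (0 <= ln c) by (rewrite <- ln_1; apply ln_le; lra).
  assert (ln c = ln c / ln 2 * ln 2) by (field; lra).
  assert (ln c / ln 2 * ln 2 <= ln c / ln 2 * 1).
  { apply Rmult_le_compat_l; [apply Rmult_le_pos; [lra| apply Rlt_le, Rinv_0_lt_compat; lra]| lra]. }
  lra. }
assert (Hs0b : INR s0 <= 1 + 2 * ln (INR k + 2)).
{ unfold s0. rewrite S_INR. pose proof (log2_nat_bound k ltac:(lia)). lra. }
set (l := log2 (INR N)).
assert (HNpos : 0 < INR N) by (apply lt_0_INR; lia).
assert (Hl0l : l0 <= l).
{ unfold l, log2. apply le_INR in HNN1.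
  assert (Rpower 2 l0 < INR N) by lra.
  pose proof (ln_increasing _ _ (Rpower_pos 2 l0) H0). rewrite ln_Rpower in H1.
  apply Rmult_le_reg_r with (ln 2); [lra|]. unfold Rdiv. rewrite Rmult_assoc Rinv_l; lra. }
assert (Hkl : INR k <= l + 1).
{ apply lt_INR in Hpred. rewrite pow_INR in Hpred. replace (INR 2) with 2 in Hpred by (simpl; lra).
  pose proof (ln_increasing (2 ^ Nat.pred k) (INR N) ltac:(apply pow_lt; lra) Hpred) as Hq. rewrite ln_pow in Hq; [|lra].
  assert (INR (Nat.pred k) < l).
  { unfold l, log2. apply Rmult_lt_reg_r with (ln 2); [lra|]. unfold Rdiv. rewrite Rmult_assoc Rinv_l; lra. }
  replace k with (S (Nat.pred k)) at 1 by lia. rewrite S_INR. lra. }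
assert (Hkp : 0 < INR k) by (apply lt_0_INR; lia).
pose proof (Hasym l (INR k) Hl0l (conj Hkp Hkl)) as HA.
assert (Er : rpow l M = Rpower l M).
{ unfold rpow. destruct (Rlt_dec 0 l); [reflexivity| lra]. }
rewrite Er.
assert (9 * eps k * INR N <= 9) by lra.
assert (64 * (ln a + ln b + ln c) <= 128 * ln (INR k + 2) + 128 * L * Rpower (INR k) M) by lra.
rewrite Hw in Hreg. lra.
Qed.
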